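(* Let $r\ge1$, $\mathbf{m}\in\mathbb{N}^r$, $m=m_1+\cdots+m_r$, $\mathbf{f}\in\mathbb{C}^r$, $b\in\mathbb{C}$, and let $0\le k\le m$ be integers. Then $$ \sum_{i=0}^{k}\frac{(-k)_i(b)_i}{(-m)_{i}\,i!}\,{}_{r+1}F_{r}\!\left(\begin{matrix}-i,\mathbf{f}+\mathbf{m}\\\mathbf{f}\end{matrix}\right) =\frac{(-b-m)_k}{(-m)_k}\,{}_{r+2}F_{r+1}\!\left(\begin{matrix}-k,b,\mathbf{f}+\mathbf{m}\\ b+m-k+1,\mathbf{f}\end{matrix}\right). $$
   Context: $(a)_k=\Gamma(a+k)/\Gamma(a)$. $\mathbf{f}+\mathbf{m}$ is componentwise; a vector among hypergeometric parameters means its components are listed. ${}_pF_q(\mathbf{a};\mathbf{b})$ denotes the terminating generalized hypergeometric series evaluated at argument $1$. Parameters are assumed such that no denominator in these terminating series vanishes. *)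

(* Defs.v *)
From HB Require Import structures.
From mathcomp Require Import all_boot all_order all_algebra.
Set Implicit Arguments. Unset Strict Implicit. Unset Printing Implicit Defensive.
Import Order.TTheory GRing.Theory Num.Theory.
Local Open Scope ring_scope.

Definition poch (C : fieldType) (a : C) (n : nat) : C :=
  \prod_(i < n) (a + i%:R).

(* Terminating generalized hypergeometric series at argument 1, with
   termination index n (the series is used only when -n is among the
   numerator parameters, so that all terms with j > n vanish):
   pFq(as; bs) = sum_{j=0}^{n} prod_a (a)_j / (prod_b (b)_j * j!). *)
Definition hypF (C : fieldType) (n : nat) (as_ bs : seq C) : C :=
  \sum_(j < n.+1)
     (\prod_(a <- as_) poch a j) / ((\prod_(b <- bs) poch b j) * (j`!)%:R).

(* Main.v *)
Require Import Defs.
From HB Require Import structures.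
From mathcomp Require Import all_boot all_order all_algebra.
Import Order.TTheory GRing.Theory Num.Theory.
Local Open Scope ring_scope.
From mathcomp Require Import ring lra.

Lemma pochS (C : fieldType) (a : C) n : poch a n.+1 = poch a n * (a + n%:R).
Proof. by rewrite /poch big_ord_recr. Qed.

Lemma poch0 (C : fieldType) (a : C) : poch a 0 = 1.
Proof. by rewrite /poch big_ord0. Qed.

Lemma poch_add (C : fieldType) (a : C) p q :
  poch a (p + q) = poch a p * poch (a + p%:R) q.
Proof.
rewrite /poch big_split_ord /=; congr (_ * _); apply: eq_bigr => i _ /=.
by rewrite natrD addrA.
Qed.

Lemma poch_refl (C : fieldType) (x : C) n :
  poch (- x) n = (-1) ^+ n * poch (x - n%:R + 1) n.
Proof.
rewrite /poch.
have -> : \prod_(i < n) (- x + i%:R) = \prod_(i < n) (-1 * (x - i%:R)).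
  by apply: eq_bigr => i _; ring.
rewrite big_split /= prodr_const card_ord; congr (_ * _).
rewrite (reindex_inj rev_ord_inj) /=; apply: eq_bigr => i _.
rewrite natrB; last by rewrite ltn_ord.
rewrite -natr1; ring.
Qed.

Lemma poch_nat_fact (C : fieldType) a n :
  poch (a.+1%:R : C) n * a`!%:R = (a + n)`!%:R.
Proof.
elim: n => [|n IH]; first by rewrite poch0 mul1r addn0.
by rewrite pochS mulrAC IH addnS factS natrM -natrD addSn mulrC.
Qed.

Lemma fact_neq0 (C : numFieldType) n : (n`!%:R : C) != 0.
Proof. by rewrite pnatr_eq0 -lt0n fact_gt0. Qed.

Lemma poch_nat_neq0 (C : numFieldType) a n : poch (a.+1%:R : C) n != 0.
Proof.
apply/negP => /eqP h; have := poch_nat_fact C a n.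
by rewrite h mul0r => /eqP; rewrite eq_sym (negbTE (fact_neq0 _ _)).
Qed.

Lemma poch_negnat_neq0 (C : numFieldType) M n : (n <= M)%N ->
  poch (- (M%:R) : C) n != 0.
Proof.
move=> hn; rewrite poch_refl mulf_neq0 ?signr_eq0 //.
by rewrite -natrB // natr1 poch_nat_neq0.
Qed.

Lemma poch_negnat_zero (C : fieldType) i j : (i < j)%N ->
  poch (- (i%:R) : C) j = 0.
Proof.
move=> hij; rewrite /poch (bigD1 (Ordinal hij)) //= addNr mul0r //.
Qed.

Lemma vdm (C : fieldType) (x y : C) N : poch (x + y) N =
  \sum_(n < N.+1) ('C(N, n))%:R * (poch x n * poch y (N - n)).
Proof.
elim: N => [|N IH]; first by rewrite big_ord1 !poch0 bin0 !mul1r.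
rewrite pochS IH mulr_suml.
have -> : \sum_(i < N.+1) ('C(N, i)%:R * (poch x i * poch y (N - i)) * (x + y + N%:R))
  = \sum_(i < N.+1) ('C(N, i)%:R * (poch x i.+1 * poch y (N - i)))
    + \sum_(i < N.+1) ('C(N, i)%:R * (poch x i * poch y (N - i).+1)).
  rewrite -big_split /=; apply: eq_bigr => i _.
  have hi : (i <= N)%N by rewrite -ltnS ltn_ord.
  rewrite !pochS natrB //; ring.
rewrite [in RHS]big_ord_recl /= bin0 poch0 subn0 !mul1r.
rewrite [X in _ = _ + X](eq_bigr (fun i : 'I_N.+1 => 'C(N,i)%:R * (poch x i.+1 * poch y (N - i)) + 'C(N,i.+1)%:R * (poch x i.+1 * poch y (N - i)))); last first.
  by move=> i _; rewrite /bump /= add1n subSS binS natrD mulrDl addrC.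
rewrite big_split /= addrCA; congr (_ + _).
rewrite big_ord_recl /= bin0 poch0 subn0 !mul1r; congr (_ + _).
rewrite [in RHS]big_ord_recr /= bin_small // mul0r addr0.
apply: eq_bigr => i _; rewrite /bump /= add1n.
have hi : (i < N)%N by [].
by rewrite subnSK.
Qed.

Lemma poch_binom (C : numFieldType) N n : (n <= N)%N ->
  poch (- N%:R : C) n = (-1) ^+ n * ('C(N, n)%:R * n`!%:R).
Proof.
move=> hn; rewrite poch_refl; congr (_ * _).
rewrite -natrB // natr1.
apply: (mulIf (fact_neq0 C (N - n))).
rewrite poch_nat_fact subnK // -mulrA -!natrM.
by rewrite bin_fact.
Qed.

Lemma chu (C : numFieldType) (B : C) N M : (N <= M)%N ->
 \sum_(n < N.+1) poch (- N%:R) n * poch B n / (poch (- M%:R) n * n`!%:R)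
   = poch (- M%:R - B) N / poch (- M%:R) N.
Proof.
move=> hNM.
have hM := @poch_negnat_neq0 C M N hNM.
apply: (mulIf hM); rewrite divfK // mulr_suml.
have -> : - M%:R - B = - (M%:R + B) by ring.
rewrite [in RHS]poch_refl.
have -> : M%:R + B - N%:R + 1 = B + ((M - N)%:R + 1) by rewrite natrB //; ring.
rewrite vdm mulr_sumr; apply: eq_bigr => n _.
have hn : (n <= N)%N by rewrite -ltnS ltn_ord.
have hnM : (n <= M)%N := leq_trans hn hNM.
have f1 : poch (- M%:R : C) N = poch (- M%:R) n * poch (- M%:R + n%:R) (N - n).
  by rewrite -[in LHS](subnKC hn) poch_add.
have f2 : poch (- M%:R + n%:R : C) (N - n) = (-1) ^+ (N - n) * poch ((M - N)%:R + 1) (N - n).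
  have -> : - M%:R + n%:R = - ((M - n)%:R : C) by rewrite natrB //; ring.
  rewrite poch_refl; congr (_ * poch _ _).
  rewrite !natrB // ?leq_sub2r //; ring.
have hs : (-1) ^+ N = (-1) ^+ n * (-1) ^+ (N - n) :> C by rewrite -exprD subnKC.
have hMn := @poch_negnat_neq0 C M n hnM.
have hf := fact_neq0 C n.
rewrite f1 f2 poch_binom // hs.
field.
by rewrite hMn hf.
Qed.

Lemma key (C : numFieldType) (b : C) (k m j : nat) : (j <= k)%N -> (k <= m)%N ->
  poch (b + m%:R - k%:R + 1) j != 0 ->
  \sum_(i < k.+1) (poch (- k%:R) i * poch b i) / (poch (- m%:R) i * i`!%:R)
      * (poch (- i%:R) j / j`!%:R)
  = poch (- b - m%:R) k / poch (- m%:R) k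
      * (poch (- k%:R) j * poch b j / (poch (b + m%:R - k%:R + 1) j * j`!%:R)).
Proof.
move=> hjk hkm hb.
have hjm : (j <= m)%N := leq_trans hjk hkm.
set N := (k - j)%N; set M := (m - j)%N.
have hNM : (N <= M)%N by rewrite leq_sub2r.
pose G := fun i : nat => (poch (- k%:R) i * poch b i) / (poch (- m%:R) i * i`!%:R)
      * (poch (- i%:R) j / j`!%:R) : C.
have s1 : \sum_(i < k.+1) G i = \sum_(n < N.+1) G (n + j)%N.
  rewrite -!(big_mkord xpredT) (big_cat_nat (leq0n j)) /=; last by rewrite ltnW.
  rewrite big_nat_cond big1 ?add0r; last first.
    move=> i /andP[/andP[_ hi] _].
    by rewrite /G (@poch_negnat_zero C i j hi) mul0r !mulr0.
  have h := @big_addn C 0 +%R 0 k.+1 j xpredT G; rewrite add0n in h; rewrite h.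
  by rewrite subSn // big_mkord.
rewrite s1.
pose c := poch (- k%:R) j * poch b j * (-1) ^+ j / (poch (- m%:R) j * j`!%:R) : C.
have s2 : forall n : 'I_N.+1, G (n + j)%N = c * (poch (- N%:R) n * poch (b + j%:R) n
    / (poch (- M%:R) n * n`!%:R)).
  move=> n.
  have hn : (n <= N)%N by rewrite -ltnS ltn_ord.
  have hnM : (n <= M)%N := leq_trans hn hNM.
  have e1 : poch (- k%:R : C) (n + j) = poch (- k%:R) j * poch (- N%:R) n.
    by rewrite addnC poch_add /N natrB //; congr (_ * poch _ _); ring.
  have e2 : poch b (n + j) = poch b j * poch (b + j%:R) n by rewrite addnC poch_add.
  have e3 : poch (- m%:R : C) (n + j) = poch (- m%:R) j * poch (- M%:R) n.
    by rewrite addnC poch_add /M natrB //; congr (_ * poch _ _); ring.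
  have e4 : poch (- (n + j)%:R : C) j = (-1) ^+ j * poch (n.+1%:R) j.
    by rewrite poch_refl; congr (_ * poch _ _); rewrite natrD -natr1; ring.
  have e5 : ((n + j)`!)%:R = poch (n.+1%:R : C) j * n`!%:R.
    by rewrite mulrC mulrC poch_nat_fact.
  have h1 := @poch_negnat_neq0 C m j hjm.
  have h2 := @poch_negnat_neq0 C M n hnM.
  have h3 := @poch_nat_neq0 C n j.
  have h4 := fact_neq0 C n.
  have h5 := fact_neq0 C j.
  rewrite /G /c e1 e2 e3 e4 e5.
  field.
  by rewrite h1 h2 h3 h4 h5.
rewrite (eq_bigr _ (fun n _ => s2 n)) -mulr_sumr chu //.
have g1 : - M%:R - (b + j%:R) = - b - m%:R :> C by rewrite /M natrB //; ring.
have g2 : poch (- m%:R : C) k = poch (- m%:R) j * poch (- M%:R) N.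
  rewrite -[in LHS](subnKC hjk) poch_add /M natrB //; congr (_ * poch _ _); ring.
have g3 : poch (- b - m%:R : C) k = poch (- b - m%:R) N * poch (- b - m%:R + N%:R) j.
  by rewrite -[in LHS](subnK hjk) poch_add.
have g4 : poch (- b - m%:R + N%:R : C) j = (-1) ^+ j * poch (b + m%:R - k%:R + 1) j.
  have -> : - b - m%:R + N%:R = - (b + m%:R - N%:R) by ring.
  rewrite poch_refl; congr (_ * poch _ _); rewrite /N natrB //; ring.
have h1 := @poch_negnat_neq0 C m j hjm.
have h2 := @poch_negnat_neq0 C M N hNM.
have h5 := fact_neq0 C j.
rewrite g1 g2 g3 g4 /c.
field.
by rewrite h1 h2 hb h5.
Qed.

Lemma sum_ext (C : fieldType) (F : nat -> C) n p : (n <= p)%N ->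
  (forall j, (n <= j)%N -> (j < p)%N -> F j = 0) ->
  \sum_(j < n) F j = \sum_(j < p) F j.
Proof.
move=> hnp hF; rewrite -!(big_mkord xpredT) (big_cat_nat (leq0n n) hnp) /=.
rewrite [X in _ = _ + X]big_nat_cond [X in _ = _ + X]big1 ?addr0 //.
by move=> j /andP[/andP[h1 h2] _]; apply: hF.
Qed.

Theorem lemma4 (C : numClosedFieldType) (r : nat) (hr : (0 < r)%N)
  (mv : 'I_r -> nat) (f : 'I_r -> C) (b : C) (k : nat)
  (hk : (k <= \sum_(l < r) mv l)%N)
  (hf : forall (l : 'I_r) (j : nat), (j <= k)%N -> poch (f l) j != 0)
  (hb : forall j : nat, (j <= k)%N ->
          poch (b + (\sum_(l < r) mv l)%:R - k%:R + 1) j != 0) :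
  let m := (\sum_(l < r) mv l)%N in
  let fm := [seq f l + (mv l)%:R | l <- enum 'I_r] in
  let fs := [seq f l | l <- enum 'I_r] in
  \sum_(i < k.+1)
     (poch (- k%:R) i * poch b i) / (poch (- m%:R) i * (i`!)%:R)
       * hypF i (- i%:R :: fm) fs
  = poch (- b - m%:R) k / poch (- m%:R) k
      * hypF k [:: - k%:R, b & fm] (b + m%:R - k%:R + 1 :: fs).
Proof.
move=> m fm fs.
pose Q := fun j : nat => (\prod_(a <- fm) poch a j) / (\prod_(c <- fs) poch c j).
rewrite /hypF.
transitivity (\sum_(j < k.+1) Q j * \sum_(i < k.+1)
   (poch (- k%:R) i * poch b i) / (poch (- m%:R) i * (i`!)%:R)
      * (poch (- i%:R) j / j`!%:R)).
  rewrite (eq_bigr (fun i : 'I_k.+1 => \sum_(j < k.+1) Q j *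
     ((poch (- k%:R) i * poch b i) / (poch (- m%:R) i * (i`!)%:R)
      * (poch (- i%:R) j / j`!%:R)))); last first.
    move=> i _; rewrite mulr_sumr.
    have E := @sum_ext C (fun j => Q j *
     ((poch (- k%:R) i * poch b i) / (poch (- m%:R) i * (i`!)%:R)
      * (poch (- (nat_of_ord i)%:R) j / j`!%:R))) i.+1 k.+1 (ltn_ord i)
      (fun j hij _ => ltac:(by rewrite /= (@poch_negnat_zero C i j hij) mul0r !mulr0)).
    rewrite /= in E; rewrite -E.
    apply: eq_bigr => j _; rewrite big_cons /Q !invfM; ring.
  rewrite exchange_big /=; apply: eq_bigr => j _; by rewrite mulr_sumr.
rewrite mulr_sumr; apply: eq_bigr => j _.
have hj : (j <= k)%N by rewrite -ltnS ltn_ord.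
rewrite key //; last exact: hb.
rewrite !big_cons /Q !invfM; ring.
Qed.
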